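(* Let $T$ be a complete first-order theory, and let $T'$ be its continuous logic counterpart (i.e., $T$ and $T'$ have the same models, first-order formulas being regarded as $\{0,1\}$-valued continuous formulas). Let $\mathcal{I}$ be a structure in a first-order language $\mathcal{L}'$. Then $\mathcal{I}$-indexed indiscernibles have the continuous modeling property in $T'$ if and only if $\mathcal{I}$-indexed indiscernibles have the (classical) modeling property in $T$.
   Context: Let $\mathcal{L}'$ be a first-order language and $\mathcal{I}$ an $\mathcal{L}'$-structure. Work in a monster model $\mathfrak{C}$ (a $\kappa$-saturated, strongly $\kappa$-homogeneous model for a strong limit cardinal $\kappa > |T|$). An $\mathcal{I}$-indexed sequence $(b_i)_{i\in\mathcal{I}}$ is $\mathcal{I}$-indiscernible if for all finite tuples $\bar i,\bar j$ from $\mathcal{I}$, $\mathrm{qftp}(\bar i)=\mathrm{qftp}(\bar j)$ implies $\mathrm{tp}(b_{\bar i})=\mathrm{tp}(b_{\bar j})$. Given an $\mathcal{I}$-indexed sequence $\mathbf{I}=(a_i)_{i\in\mathcal{I}}$, a sequence $(b_j)_{j\in\mathcal{I}}$ is locally based on $\mathbf{I}$ in the continuous sense if for every finite set $\Delta$ of formulas, every finite tuple $\bar j\subseteq\mathcal{I}$ and every $\varepsilon>0$ there is $\bar i\subseteq\mathcal{I}$ with $\mathrm{qftp}(\bar i)=\mathrm{qftp}(\bar j)$ and $|\varphi(b_{\bar j})-\varphi(a_{\bar i})|\le\varepsilon$ for all $\varphi\in\Delta$; it is locally based on $\mathbf{I}$ in the classical sense if instead one requires $\mathrm{tp}^{\Delta}(b_{\bar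 j})=\mathrm{tp}^{\Delta}(a_{\bar i})$. $\mathcal{I}$-indexed indiscernibles have the continuous modeling property in a continuous theory if for every $\mathcal{I}$-indexed sequence $\mathbf{I}$ in the monster model there is an $\mathcal{I}$-indiscernible sequence locally based on $\mathbf{I}$ in the continuous sense; they have the (classical) modeling property in a first-order theory if the same holds with ''locally based'' in the classical sense. *)

(* Defs.v *)
From mathcomp Require Import all_boot all_algebra.
From mathcomp Require Import classical_sets boolp cardinality reals Rstruct.
From Stdlib Require List.

Set Implicit Arguments.
Unset Strict Implicit.
Unset Printing Implicit Defensive.
Import GRing.Theory Num.Theory.

Local Open Scope classical_set_scope.
Local Open Scope ring_scope.

Definition RR := Rdefinitions.R.

Record language := Language {
  func : Type;
  rel : Type;
  farity : func -> nat;
  rarity : rel -> nat }.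

Section Syntax.
Variable L : language.

Inductive term (n : nat) : Type :=
| tvar : 'I_n -> term n
| tfun (f : func L) : ('I_(farity f) -> term n) -> term n.

(* first-order formulas with free variables among x_0, ..., x_{n-1};
   quantifiers bind the new variable x_0 of a formula with n.+1 variables
   (the old variables being shifted by one) *)
Inductive formula : nat -> Type :=
| fbot n : formula n
| ftop n : formula n
| feq n : term n -> term n -> formula n
| frel n (R : rel L) : ('I_(rarity R) -> term n) -> formula n
| fnot n : formula n -> formula n
| fand n : formula n -> formula n -> formula n
| for_ n : formula n -> formula n -> formula n
| fimp n : formula n -> formula n -> formula n
| fex n : formula n.+1 -> formula n
| fall n : formula n.+1 -> formula n.

Definition sentence := formula 0.

Fixpoint qfree n (phi : formula n) : Prop :=
  match phi with
  | fex _ _ | fall _ _ => False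
  | fnot _ p => qfree p
  | fand _ p q | for_ _ p q | fimp _ p q => qfree p /\ qfree q
  | _ => True
  end.

(* (two-valued) continuous formulas of the continuous counterpart:
   atomic formulas are the {0,1}-valued relations and the discrete metric,
   connectives are arbitrary continuous functions [0,1]^k -> [0,1],
   quantifiers are sup and inf. *)
Definition unit_cube k (x : 'I_k -> RR) := forall i, 0 <= x i <= 1.

Definition connective k (u : ('I_k -> RR) -> RR) : Prop :=
  (forall x, unit_cube x -> 0 <= u x <= 1) /\
  (forall x, unit_cube x -> forall eps : RR, 0 < eps ->
     exists2 delta : RR, 0 < delta &
       forall y, unit_cube y -> (forall i, `|x i - y i| < delta) ->
         `|u x - u y| < eps).

Inductive cformula : nat -> Type :=
| cdist n : term n -> term n -> cformula n
| crel n (R : rel L) : ('I_(rarity R) -> term n) -> cformula n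
| cconn n k (u : ('I_k -> RR) -> RR) :
    connective u -> ('I_k -> cformula n) -> cformula n
| csup n : cformula n.+1 -> cformula n
| cinf n : cformula n.+1 -> cformula n.

End Syntax.

Record structure (L : language) := Structure {
  carrier :> Type;
  carrier_nonempty : inhabited carrier;
  interp_fun : forall f : func L, ('I_(farity f) -> carrier) -> carrier;
  interp_rel : forall R : rel L, ('I_(rarity R) -> carrier) -> Prop }.

Section Semantics.
Variables (L : language) (M : structure L).

Definition scons n (x : M) (e : 'I_n -> M) : 'I_n.+1 -> M :=
  fun i => if unlift ord0 i is Some j then e j else x.

Fixpoint teval n (e : 'I_n -> M) (t : term L n) : M :=
  match t with
  | tvar v => e v
  | tfun f ts => @interp_fun L M f (fun j => teval e (ts j))
  end.

Fixpoint sat n (phi : formula L n) : ('I_n -> M) -> Prop :=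
  match phi in formula _ n return ('I_n -> M) -> Prop with
  | fbot _ => fun _ => False
  | ftop _ => fun _ => True
  | feq _ t1 t2 => fun e => teval e t1 = teval e t2
  | frel _ R ts => fun e => @interp_rel L M R (fun j => teval e (ts j))
  | fnot _ p => fun e => ~ sat p e
  | fand _ p q => fun e => sat p e /\ sat q e
  | for_ _ p q => fun e => sat p e \/ sat q e
  | fimp _ p q => fun e => sat p e -> sat q e
  | fex _ p => fun e => exists x : M, sat p (scons x e)
  | fall _ p => fun e => forall x : M, sat p (scons x e)
  end.

(* continuous semantics; convention: 0 = true, 1 = false *)
Definition truth_value (P : Prop) : RR := if pselect P then 0 else 1.

Fixpoint cval n (phi : cformula L n) : ('I_n -> M) -> RR :=
  match phi in cformula _ n return ('I_n -> M) -> RR with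
  | cdist _ t1 t2 => fun e => truth_value (teval e t1 = teval e t2)
  | crel _ R ts => fun e => truth_value (@interp_rel L M R (fun j => teval e (ts j)))
  | cconn _ k u _ args => fun e => u (fun i => cval (args i) e)
  | csup _ p => fun e => sup [set cval p (scons x e) | x in [set: M]]
  | cinf _ p => fun e => inf [set cval p (scons x e) | x in [set: M]]
  end.

Lemma ord0_empty (i : 'I_0) : False. Proof. by case: i. Qed.

Definition empty_env : 'I_0 -> M := fun i => False_rect M (ord0_empty i).

Definition models (T : set (sentence L)) : Prop :=
  forall phi, T phi -> sat phi empty_env.

End Semantics.


Definition complete_theory (L : language) (T : set (sentence L)) : Prop :=
  (exists M : structure L, models M T) /\
  forall phi : sentence L,
    (forall M : structure L, models M T -> sat phi (empty_env M)) \/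
    (forall M : structure L, models M T -> sat (fnot phi) (empty_env M)).

Local Open Scope card_scope.

Definition card_lt T U (A : set T) (B : set U) : Prop :=
  A #<= B /\ ~ (B #<= A).

(* the cardinal kappa is represented by the type K (kappa = |K|) *)
Definition strong_limit (K : Type) : Prop :=
  forall (U : Type) (X : set U), card_lt X [set: K] ->
    card_lt [set Y : set U | Y `<=` X] [set: K].

Section Monster.
Variables (L : language) (M : structure L).

Record pformula (n : nat) := PFormula {
  pf_npar : nat;
  pf_phi : formula L (n + pf_npar);
  pf_par : 'I_pf_npar -> M }.

Definition psat n (p : pformula n) (b : 'I_n -> M) : Prop :=
  sat (pf_phi p)
    (fun v => match split v with inl j => b j | inr i => @pf_par n p i end).

Definition over n (A : set M) (p : pformula n) : Prop := forall i, A (@pf_par n p i).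

Definition saturated (K : Type) : Prop :=
  forall (A : set M), card_lt A [set: K] ->
  forall n (q : set (pformula n)),
    (forall p, q p -> over A p) ->
    (forall q0, q0 `<=` q -> finite_set q0 ->
       exists b : 'I_n -> M, forall p, q0 p -> psat p b) ->
    exists b : 'I_n -> M, forall p, q p -> psat p b.

Definition automorphism (s : M -> M) : Prop :=
  bijective s /\
  (forall f args, s (@interp_fun L M f args) = @interp_fun L M f (fun j => s (args j))) /\
  (forall R args, @interp_rel L M R args <-> @interp_rel L M R (fun j => s (args j))).

Definition partial_elementary (A : set M) (f : M -> M) : Prop :=
  forall n (phi : formula L n) (a : 'I_n -> M), (forall i, A (a i)) ->
    (sat phi a <-> sat phi (fun i => f (a i))).

Definition strongly_homogeneous (K : Type) : Prop :=
  forall (A : set M) (f : M -> M), card_lt A [set: K] ->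
    partial_elementary A f ->
    exists s, automorphism s /\ forall x, A x -> s x = f x.

(* C is a monster model of T: a model of T that is kappa-saturated and
   strongly kappa-homogeneous for a strong limit cardinal kappa > |T|
   (|T| = |L| + aleph_0 = number of L-sentences). *)
Definition monster_model (T : set (sentence L)) : Prop :=
  models M T /\
  exists K : Type,
    strong_limit K /\ card_lt [set: sentence L] [set: K] /\
    saturated K /\ strongly_homogeneous K.

End Monster.

Lemma tuple_div_lt n k (v : 'I_(n * k)) : (v %/ k < n)%N.
Proof.
case: k v => [|k] v; first by case: v => m; rewrite muln0.
by rewrite ltn_divLR // ltn_ord.
Qed.

Lemma tuple_mod_lt n k (v : 'I_(n * k)) : (v %% k < k)%N.
Proof.
case: k v => [|k] v; first by case: v => m; rewrite muln0.
by rewrite ltn_mod.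
Qed.

Section Indiscernibles.
Variables (L L' : language) (C : structure L) (I : structure L') (k : nat).

Definition Iseq := I -> 'I_k -> C.

Definition qftp_eq n (i j : 'I_n -> I) : Prop :=
  forall phi : formula L' n, qfree phi -> (sat phi i <-> sat phi j).

(* the concatenated tuple b_{i_0} ... b_{i_{n-1}} (of length n * k):
   its coordinate number j * k + l is the l-th coordinate of b_{i_j} *)
Definition subtuple (b : Iseq) n (i : 'I_n -> I) : 'I_(n * k) -> C :=
  fun v => b (i (Ordinal (tuple_div_lt v))) (Ordinal (tuple_mod_lt v)).

Definition tp_eq (b a : Iseq) n (j i : 'I_n -> I) : Prop :=
  forall phi : formula L (n * k),
    sat phi (subtuple b j) <-> sat phi (subtuple a i).

Definition indiscernible (b : Iseq) : Prop :=
  forall n (i j : 'I_n -> I), qftp_eq i j -> tp_eq b b i j.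

Definition locally_based (b a : Iseq) : Prop :=
  forall n (Delta : list (formula L (n * k))) (j : 'I_n -> I),
  exists i : 'I_n -> I, qftp_eq i j /\
    forall phi, List.In phi Delta ->
      (sat phi (subtuple b j) <-> sat phi (subtuple a i)).

Definition locally_based_cont (b a : Iseq) : Prop :=
  forall n (Delta : list (cformula L (n * k))) (j : 'I_n -> I)
         (eps : RR), 0 < eps ->
  exists i : 'I_n -> I, qftp_eq i j /\
    forall phi, List.In phi Delta ->
      `|cval phi (subtuple b j) - cval phi (subtuple a i)| <= eps.

Definition modeling_property : Prop :=
  forall a : Iseq, exists b : Iseq, indiscernible b /\ locally_based b a.

Definition cont_modeling_property : Prop :=
  forall a : Iseq, exists b : Iseq, indiscernible b /\ locally_based_cont b a.

End Indiscernibles.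

(* Main.v *)
Require Import Defs.
From mathcomp Require Import all_boot all_algebra.
From mathcomp Require Import classical_sets boolp cardinality reals Rstruct.
From mathcomp Require Import topology normedtype matrix_normedtype Rstruct_topology.
From mathcomp Require Import ring lra set_interval.
Import order.Order.TTheory GRing.Theory Num.Theory.
Set Implicit Arguments.
Unset Strict Implicit.
Unset Printing Implicit Defensive.
Local Open Scope classical_set_scope.
Local Open Scope ring_scope.

Lemma unif_conn k (u : ('I_k -> RR) -> RR) : connective u ->
  forall eps : RR, 0 < eps -> exists2 delta : RR, 0 < delta &
   forall x y, unit_cube x -> unit_cube y -> (forall i, `|x i - y i| < delta) ->
     `|u x - u y| < eps.
Proof.
move=> [_ hc] eps eps0.
pose A := fun _ : 'I_k => `[(0:Rdefinitions.R), 1]%classic.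
pose K := [set v : 'rV[Rdefinitions.R]_k | forall i, A i (v ord0 i)].
have cK : compact K by apply: rV_compact => i; exact: segment_compact.
pose cv (v : 'rV[Rdefinitions.R]_k) : 'I_k -> RR := fun i => v ord0 i.
have Kcube v : K v -> unit_cube (cv v).
  by move=> Kv i; have := Kv i; rewrite /A /= in_itv.
have cubeK x : unit_cube x -> K (\row_i x i).
  by move=> cx j; rewrite /A /= in_itv mxE; exact: cx.
have cvK x : cv (\row_i x i) = x by apply: funext => i; rewrite /cv mxE.
have e20 : 0 < eps / 2 by rewrite divr_gt0.
have /boolp.choice [d hd] : forall v, exists dv : RR, 0 < dv /\ (K v -> forall y, unit_cube y ->
     (forall i, `|cv v i - y i| < dv) -> `|u (cv v) - u y| < eps / 2).
  move=> v.
  case: (pselect (K v)) => Kv.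
    have [dv dv0 H] := hc _ (Kcube v Kv) _ e20.
    by exists dv; split => // _ y cy hy; exact: H.
  by exists 1; split => //.
pose P (delta : RR) (v : 'rV[Rdefinitions.R]_k) := K v -> forall y, unit_cube y ->
   (forall i, `|cv v i - y i| < delta) -> `|u (cv v) - u y| < eps.
have H := (compact_near_coveringP K).1 cK _ (0^'+) P _.
have {H} H : \forall delta \near 0^'+, K `<=` P delta.
  apply: H => v Kv.
  have [dv0 hv] := hd v.
  have dv20 : 0 < d v / 2 by rewrite divr_gt0.
  near=> x' delta.
  rewrite /P /=; move=> Kx' y cy hxy.
  have h1 : forall i, `|cv v i - cv x' i| < d v / 2.
    near: x'.
    apply: filterS (nbhsx_ballx v (d v / 2) dv20) => x' [_ hb] i.
    exact: hb.
  have h2 : delta < d v / 2 by near: delta; exact: nbhs_right_lt.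
  have a1 : `|u (cv v) - u (cv x')| < eps / 2.
    apply: hv => // i; apply: lt_le_trans (h1 i) _; lra.
  have a2 : `|u (cv v) - u y| < eps / 2.
    apply: hv => // i.
    have := ler_normD (cv v i - cv x' i) (cv x' i - y i).
    have := h1 i; have := hxy i.
    rewrite (_ : cv v i - cv x' i + (cv x' i - y i) = cv v i - y i); last by ring.
    move=> ? ? ?; lra.
  have := ler_normD (u (cv x') - u (cv v)) (u (cv v) - u y).
  rewrite (_ : u (cv x') - u (cv v) + (u (cv v) - u y) = u (cv x') - u y); last by ring.
  rewrite distrC in a1; lra.
have [delta [d0 hdel]] : exists delta, 0 < delta /\ K `<=` P delta.
  have := filter_ex (filterI (@nbhs_right_gt _ 0) H).
  by move=> [delta [? ?]]; exists delta.
exists delta => // x y cx cy hxy.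
have := hdel _ (cubeK x cx) (cubeK x cx) y cy.
by rewrite cvK; apply.
Unshelve. all: end_near.
Qed.

Section Main.
Variable L : language.

Definition cformula_ind' (P : forall n, cformula L n -> Prop)
  (hd : forall n t1 t2, P n (cdist t1 t2))
  (hr : forall n R ts, P n (@crel L n R ts))
  (hc : forall n k u (hu : @connective k u) args, (forall i, P n (args i)) -> P n (cconn hu args))
  (hs : forall n p, P n.+1 p -> P n (csup p))
  (hi : forall n p, P n.+1 p -> P n (cinf p)) :
  forall n phi, P n phi :=
  fix F n (phi : cformula L n) {struct phi} : P n phi :=
  match phi as phi0 in cformula _ n0 return P n0 phi0 with
  | cdist n t1 t2 => hd n t1 t2
  | crel n R ts => hr n R ts
  | cconn n k u hu args => hc n k u hu args (fun i => F n (args i))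
  | csup n p => hs n p (F _ p)
  | cinf n p => hi n p (F _ p)
  end.

Variable C : structure L.

Lemma tv01 (P : Prop) : 0 <= truth_value P <= 1.
Proof. rewrite /truth_value; destruct (pselect P); apply/andP; split; rewrite ?lexx // ?ler01 //. Qed.

Lemma sup_le_eps (A B : Type) (f : A -> RR) (g : B -> RR) (eps : RR) :
  inhabited A -> (forall b, g b <= 1) ->
  (forall a, exists b, f a <= g b + eps) ->
  sup [set f a | a in [set: A]] <= sup [set g b | b in [set: B]] + eps.
Proof.
move=> [a0] g1 h; apply: ge_sup; first by exists (f a0), a0.
move=> _ [a _ <-]; have [b hb] := h a; apply: (le_trans hb).
rewrite lerD2r; apply: ub_le_sup; last by exists b.
by exists 1 => _ [b' _ <-].
Qed.

Lemma inf_le_eps (A B : Type) (f : A -> RR) (g : B -> RR) (eps : RR) :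
  inhabited A -> (forall b, 0 <= g b) ->
  (forall a, exists b, g b <= f a + eps) ->
  inf [set g b | b in [set: B]] <= inf [set f a | a in [set: A]] + eps.
Proof.
move=> [a0] g0 h; rewrite -lerBlDr; apply: lb_le_inf; first by exists (f a0), a0.
move=> _ [a _ <-]; have [b hb] := h a; rewrite lerBlDr; apply: le_trans hb.
apply: ge_inf; last by exists b.
by exists 0 => _ [b' _ <-].
Qed.

Lemma abs_le_eps (x y eps : RR) : x <= y + eps -> y <= x + eps -> `|x - y| <= eps.
Proof. by move=> h1 h2; rewrite ler_norml; apply/andP; split; lra. Qed.

Lemma sup_close (A B : Type) (f : A -> RR) (g : B -> RR) (eps : RR) :
  inhabited A -> inhabited B ->
  (forall a, 0 <= f a <= 1) -> (forall b, 0 <= g b <= 1) ->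
  (forall a, exists b, `|f a - g b| <= eps) ->
  (forall b, exists a, `|f a - g b| <= eps) ->
  `|sup [set f a | a in [set: A]] - sup [set g b | b in [set: B]]| <= eps /\
  `|inf [set f a | a in [set: A]] - inf [set g b | b in [set: B]]| <= eps.
Proof.
move=> iA iB f01 g01 h1 h2; split; apply: abs_le_eps.
- apply: sup_le_eps => // [b|a]; first by case/andP: (g01 b).
  have [b hb] := h1 a; exists b; move: hb; rewrite ler_norml => /andP[]; lra.
- apply: sup_le_eps => // [a|b]; first by case/andP: (f01 a).
  have [a hb] := h2 b; exists a; move: hb; rewrite ler_norml => /andP[]; lra.
- apply: inf_le_eps => // [a|b]; first by case/andP: (f01 a).
  have [a hb] := h2 b; exists a; move: hb; rewrite ler_norml => /andP[]; lra.
- apply: inf_le_eps => // [b|a]; first by case/andP: (g01 b).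
  have [b hb] := h1 a; exists b; move: hb; rewrite ler_norml => /andP[]; lra.
Qed.

Lemma sup01 (A : Type) (f : A -> RR) : inhabited A -> (forall a, 0 <= f a <= 1) ->
  0 <= sup [set f a | a in [set: A]] <= 1.
Proof.
move=> [a0] h; apply/andP; split.
  have ub : has_ubound [set f a | a in [set: A]].
    by exists 1 => _ [b _ <-]; case/andP: (h b).
  have H0 : [set f a | a in [set: A]] (f a0) by exists a0.
  apply: le_trans (ub_le_sup ub H0); by case/andP: (h a0).
apply: ge_sup; first by exists (f a0), a0.
by move=> _ [b _ <-]; case/andP: (h b).
Qed.

Lemma inf01 (A : Type) (f : A -> RR) : inhabited A -> (forall a, 0 <= f a <= 1) ->
  0 <= inf [set f a | a in [set: A]] <= 1.
Proof.
move=> [a0] h; apply/andP; split.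
  apply: lb_le_inf; first by exists (f a0), a0.
  by move=> _ [b _ <-]; case/andP: (h b).
have lb : has_lbound [set f a | a in [set: A]].
  by exists 0 => _ [b _ <-]; case/andP: (h b).
have H0 : [set f a | a in [set: A]] (f a0) by exists a0.
apply: le_trans (ge_inf lb H0) _; by case/andP: (h a0).
Qed.

Lemma cval01 n (phi : cformula L n) (e : 'I_n -> C) : 0 <= cval phi e <= 1.
Proof.
move: n phi e; apply: cformula_ind' => /=.
- by move=> *; exact: tv01.
- by move=> *; exact: tv01.
- by move=> n k u [hu1 _] args IH e; apply: hu1 => i; exact: IH.
- move=> n p IH e; apply: sup01 => //; exact: carrier_nonempty.
- move=> n p IH e; apply: inf01 => //; exact: carrier_nonempty.
Qed.


Fixpoint pats n (l : list (formula L n)) : list (formula L n) :=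
  match l with
  | nil => [:: ftop L n]
  | cons psi r => List.flat_map (fun rho => [:: fand psi rho; fand (fnot psi) rho]) (pats r)
  end.

Lemma pats_ex n (l : list (formula L n)) (e : 'I_n -> C) :
  exists rho, List.In rho (pats l) /\ sat rho e.
Proof.
elim: l => [|psi r [rho [hin hs]]] /=; first by exists (ftop L n); split; [left|].
case: (pselect (sat psi e)) => hp.
  exists (fand psi rho); split => //; apply/List.in_flat_map; exists rho; split => //; by left.
exists (fand (fnot psi) rho); split => //; apply/List.in_flat_map; exists rho; split => //; by right; left.
Qed.

Definition agree n (Phi : list (formula L n)) (e e' : 'I_n -> C) :=
  forall psi, List.In psi Phi -> (sat psi e <-> sat psi e').

Lemma pats_agree n (l : list (formula L n)) rho (e1 e2 : 'I_n -> C) :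
  List.In rho (pats l) -> sat rho e1 -> sat rho e2 -> agree l e1 e2.
Proof.
elim: l rho => [|psi r IH] rho /=; first by move=> _ _ _ psi [].
move=> /List.in_flat_map [rho' [hin [<-|[<-|[]]]]] /= [h1 h2] [h3 h4] psi' [<-|hr].
- by split.
- exact: (IH rho').
- by split => //.
- exact: (IH rho').
Qed.

Lemma In_mem (T : eqType) (x : T) (s : seq T) : x \in s -> List.In x s.
Proof. by elim: s => [//|y s IH]; rewrite in_cons => /orP [/eqP ->|/IH h]; [left|right]. Qed.

Lemma tv_close (P Q : Prop) (eps : RR) : 0 < eps -> (P <-> Q) ->
  `|truth_value P - truth_value Q| <= eps.
Proof. by move=> e0 /propext ->; rewrite subrr normr0 ltW. Qed.

Lemma approx n (phi : cformula L n) (eps : RR) : 0 < eps ->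
  exists Phi : list (formula L n), forall e e' : 'I_n -> C,
    agree Phi e e' -> `|cval phi e - cval phi e'| <= eps.
Proof.
move: n phi eps; apply: cformula_ind' => /=.
- move=> n t1 t2 eps e0; exists [:: feq t1 t2] => e e' h.
  by apply: tv_close => //; exact: (h _ (or_introl erefl)).
- move=> n R ts eps e0; exists [:: @Defs.frel L n R ts] => e e' h.
  by apply: tv_close => //; exact: (h _ (or_introl erefl)).
- move=> n k u hu args IH eps e0.
  have [delta d0 hdel] := unif_conn hu e0.
  have d20 : 0 < delta / 2 by rewrite divr_gt0.
  have /boolp.choice [Ph hPh] : forall i, exists Phi : list (formula L n),
      forall e e' : 'I_n -> C, agree Phi e e' ->
      `|cval (args i) e - cval (args i) e'| <= delta / 2.
    by move=> i; exact: IH.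
  exists (List.concat (List.map Ph (enum 'I_k))) => e e' h.
  apply: ltW; apply: hdel.
  + by move=> i; exact: cval01.
  + by move=> i; exact: cval01.
  move=> i; apply: (le_lt_trans (hPh i e e' _)); last by lra.
  move=> psi hpsi; apply: h; apply/List.in_concat; exists (Ph i); split => //.
  by apply: List.in_map; apply: In_mem; rewrite mem_enum.
- move=> n p IH eps e0; have [Php hPhp] := IH eps e0.
  exists (List.map (@fex L n) (pats Php)) => e e' h.
  have key : forall (e1 e2 : 'I_n -> C), agree (List.map (@fex L n) (pats Php)) e1 e2 ->
      forall x, exists x', agree Php (scons x e1) (scons x' e2).
    move=> e1 e2 h12 x.
    have [rho [hin hs]] := pats_ex Php (scons x e1).
    have : sat (fex rho) e1 by exists x.
    move/(h12 _ (List.in_map _ _ _ hin)) => [x' hx'].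
    by exists x'; exact: (pats_agree hin hs hx').
  have hsym : agree (List.map (@fex L n) (pats Php)) e' e.
    by move=> psi hp; split => /(h psi hp).
  apply: (proj1 (@sup_close _ _ (fun x => cval p (scons x e)) (fun x => cval p (scons x e')) eps _ _ _ _ _ _)).
  + exact: carrier_nonempty.
  + exact: carrier_nonempty.
  + by move=> a; exact: cval01.
  + by move=> a; exact: cval01.
  + move=> x; have [x' hx'] := key _ _ h x; exists x'; exact: hPhp.
  + move=> x; have [x' hx'] := key _ _ hsym x; exists x'; rewrite distrC; apply: hPhp.
    by move=> psi hp; split => /(hx' psi hp).
- move=> n p IH eps e0; have [Php hPhp] := IH eps e0.
  exists (List.map (@fex L n) (pats Php)) => e e' h.
  have key : forall (e1 e2 : 'I_n -> C), agree (List.map (@fex L n) (pats Php)) e1 e2 ->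
      forall x, exists x', agree Php (scons x e1) (scons x' e2).
    move=> e1 e2 h12 x.
    have [rho [hin hs]] := pats_ex Php (scons x e1).
    have : sat (fex rho) e1 by exists x.
    move/(h12 _ (List.in_map _ _ _ hin)) => [x' hx'].
    by exists x'; exact: (pats_agree hin hs hx').
  have hsym : agree (List.map (@fex L n) (pats Php)) e' e.
    by move=> psi hp; split => /(h psi hp).
  apply: (proj2 (@sup_close _ _ (fun x => cval p (scons x e)) (fun x => cval p (scons x e')) eps _ _ _ _ _ _)).
  + exact: carrier_nonempty.
  + exact: carrier_nonempty.
  + by move=> a; exact: cval01.
  + by move=> a; exact: cval01.
  + move=> x; have [x' hx'] := key _ _ h x; exists x'; exact: hPhp.
  + move=> x; have [x' hx'] := key _ _ hsym x; exists x'; rewrite distrC; apply: hPhp.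
    by move=> psi hp; split => /(hx' psi hp).
Qed.


Lemma approx_list n (Delta : list (cformula L n)) (eps : RR) : 0 < eps ->
  exists Phi : list (formula L n), forall phi, List.In phi Delta ->
    forall e e' : 'I_n -> C, agree Phi e e' -> `|cval phi e - cval phi e'| <= eps.
Proof.
move=> e0; elim: Delta => [|phi D [Phi hPhi]]; first by exists nil.
have [Ph hPh] := approx phi e0.
exists (Ph ++ Phi)%list => psi [<-|hin] e e' h.
  by apply: hPh => chi hc; apply: h; apply: List.in_or_app; left.
by apply: hPhi => // chi hc; apply: h; apply: List.in_or_app; right.
Qed.

End Main.

Section Trans.
Variable L : language.

Lemma cst_conn (c : RR) : 0 <= c <= 1 -> connective (fun _ : 'I_0 -> RR => c).
Proof.
move=> hc; split => // x _ eps e0; exists 1 => // y _ _.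
by rewrite subrr normr0.
Qed.

Lemma neg_conn : connective (fun x : 'I_1 -> RR => 1 - x ord0).
Proof.
split.
  move=> x hx; have := hx ord0; case/andP => h1 h2; apply/andP; split; lra.
move=> x _ eps e0; exists eps => // y _ h.
have := h ord0; rewrite (_ : 1 - x ord0 - (1 - y ord0) = - (x ord0 - y ord0)); last by ring.
by rewrite normrN.
Qed.

Definition i1 : 'I_2 := @Ordinal 2 1 isT.

Lemma max_conn : connective (fun x : 'I_2 -> RR => Num.max (x ord0) (x i1)).
Proof.
split.
  move=> x hx; have := hx ord0; have := hx i1.
  case/andP => h1 h2; case/andP => h3 h4.
  rewrite /Num.max; case: (ltP (x ord0) (x i1)) => _; apply/andP; split; lra.
move=> x _ eps e0; exists eps => // y _ h.
have := h ord0; have := h i1; rewrite !ltr_norml.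
case/andP => h1 h2; case/andP => h3 h4.
rewrite /Num.max; case: (ltP (x ord0) (x i1)) => ?; case: (ltP (y ord0) (y i1)) => ?; apply/andP; split; lra.
Qed.

Definition noargs n : 'I_0 -> cformula L n := fun i => False_rect _ (ord0_empty i).

Definition cneg n (p : cformula L n) : cformula L n := cconn neg_conn (fun _ => p).
Definition cmax n (p q : cformula L n) : cformula L n :=
  cconn max_conn (fun i : 'I_2 => if val i == 0%N then p else q).

Lemma c0 : 0 <= (0 : Rdefinitions.R) <= 1. Proof. by rewrite lexx ler01. Qed.
Lemma c1 : 0 <= (1 : Rdefinitions.R) <= 1. Proof. by rewrite lexx ler01. Qed.

Fixpoint tr n (phi : formula L n) : cformula L n :=
  match phi with
  | fbot n => cconn (cst_conn c1) (@noargs n)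
  | ftop n => cconn (cst_conn c0) (@noargs n)
  | feq _ t1 t2 => cdist t1 t2
  | Defs.frel n R ts => @crel L n R ts
  | fnot _ p => cneg (tr p)
  | fand _ p q => cmax (tr p) (tr q)
  | for_ _ p q => cneg (cmax (cneg (tr p)) (cneg (tr q)))
  | fimp _ p q => cneg (cmax (tr p) (cneg (tr q)))
  | fex _ p => cinf (tr p)
  | fall _ p => csup (tr p)
  end.

End Trans.


Section TrOk.
Variables (L : language) (C : structure L).

Lemma tv_iff (P Q : Prop) : (P <-> Q) -> truth_value P = truth_value Q.
Proof. by move/propext ->. Qed.

Lemma tv_neg (P : Prop) : 1 - truth_value P = truth_value (~ P).
Proof.
rewrite /truth_value; destruct (pselect P) as [p|p]; destruct (pselect (~ P)) as [q|q];
  try tauto; by rewrite ?subr0 ?subrr.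
Qed.

Lemma tv_max (P Q : Prop) : Num.max (truth_value P) (truth_value Q) = truth_value (P /\ Q).
Proof.
rewrite /truth_value; destruct (pselect P) as [p|p]; destruct (pselect Q) as [q|q];
  destruct (pselect (P /\ Q)) as [pq|pq]; try (exfalso; tauto);
  simpl; rewrite /Num.max; case: ltP => ? //; lra.
Qed.

Lemma tv_inf (A : Type) (P : A -> Prop) : inhabited A ->
  inf [set truth_value (P x) | x in [set: A]] = truth_value (exists x, P x).
Proof.
move=> [a0].
have lb : has_lbound [set truth_value (P x) | x in [set: A]].
  by exists 0 => _ [b _ <-]; case/andP: (tv01 (P b)).
have ne : [set truth_value (P x) | x in [set: A]] !=set0 by exists (truth_value (P a0)), a0.
rewrite [X in _ = X]/truth_value; destruct (pselect (exists x, P x)) as [[x px]|np].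
  apply/eqP; rewrite eq_le; apply/andP; split.
    have H0 : [set truth_value (P x) | x in [set: A]] (truth_value (P x)) by exists x.
    have := ge_inf lb H0; rewrite /truth_value; destruct (pselect (P x)) => //.
  by apply: lb_le_inf => // _ [b _ <-]; case/andP: (tv01 (P b)).
apply/eqP; rewrite eq_le; apply/andP; split.
  have H0 : [set truth_value (P x) | x in [set: A]] (truth_value (P a0)) by exists a0.
  have := ge_inf lb H0; rewrite /truth_value; destruct (pselect (P a0)) => //.
  by exfalso; apply: np; exists a0.
apply: lb_le_inf => // _ [b _ <-]; rewrite /truth_value; destruct (pselect (P b)) => //.
by exfalso; apply: np; exists b.
Qed.

Lemma tv_sup (A : Type) (P : A -> Prop) : inhabited A ->
  sup [set truth_value (P x) | x in [set: A]] = truth_value (forall x, P x).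
Proof.
move=> [a0].
have ub : has_ubound [set truth_value (P x) | x in [set: A]].
  by exists 1 => _ [b _ <-]; case/andP: (tv01 (P b)).
have ne : [set truth_value (P x) | x in [set: A]] !=set0 by exists (truth_value (P a0)), a0.
rewrite [X in _ = X]/truth_value; destruct (pselect (forall x, P x)) as [px|np].
  apply/eqP; rewrite eq_le; apply/andP; split.
    apply: ge_sup => // _ [b _ <-]; rewrite /truth_value; destruct (pselect (P b)) as [pb|nb] => //.
  have H0 : [set truth_value (P x) | x in [set: A]] (truth_value (P a0)) by exists a0.
  have := ub_le_sup ub H0; rewrite /truth_value; destruct (pselect (P a0)) => //.
have [x nx] : exists x, ~ P x.
  by apply: boolp.contrapT => h; apply: np => x; apply: boolp.contrapT => nx; apply: h; exists x.
apply/eqP; rewrite eq_le; apply/andP; split.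
  by apply: ge_sup => // _ [b _ <-]; case/andP: (tv01 (P b)).
have H0 : [set truth_value (P x) | x in [set: A]] (truth_value (P x)) by exists x.
have := ub_le_sup ub H0; rewrite /truth_value; destruct (pselect (P x)) => //.
Qed.

Lemma tr_ok n (phi : formula L n) (e : 'I_n -> C) :
  cval (tr phi) e = truth_value (sat phi e).
Proof.
elim: phi e => /= {n}.
- by move=> n e; rewrite /truth_value; destruct (pselect False).
- by move=> n e; rewrite /truth_value; destruct (pselect True).
- by [].
- by [].
- by move=> n p IH e; rewrite IH tv_neg.
- by move=> n p IHp q IHq e; rewrite /i1 /= IHp IHq tv_max.
- move=> n p IHp q IHq e; rewrite /i1 /= IHp IHq !tv_neg tv_max tv_neg.
  apply: tv_iff; split; last by move=> [h|h] [h1 h2].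
  move=> h; case: (pselect (sat p e)) => hp; [by left|right].
  by apply: boolp.contrapT => hq; apply: h.
- move=> n p IHp q IHq e; rewrite /i1 /= IHp IHq !tv_neg tv_max tv_neg.
  apply: tv_iff; split; last by move=> h [h1 h2]; apply: h2; exact: h.
  by move=> h hp; apply: boolp.contrapT => hq; apply: h.
- move=> n p IH e.
  have E : (fun x => cval (tr p) (scons x e)) = fun x => truth_value (sat p (scons x e)).
    by apply: funext => x; exact: IH.
  rewrite E tv_inf //; exact: carrier_nonempty.
- move=> n p IH e.
  have E : (fun x => cval (tr p) (scons x e)) = fun x => truth_value (sat p (scons x e)).
    by apply: funext => x; exact: IH.
  rewrite E tv_sup //; exact: carrier_nonempty.
Qed.

End TrOk.

Lemma tv_half (P Q : Prop) :
  `|truth_value P - truth_value Q| <= 1 / 2 -> (P <-> Q).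
Proof.
rewrite /truth_value; destruct (pselect P) as [p|p]; destruct (pselect Q) as [q|q] => //=.
- by rewrite sub0r normrN normr1; lra.
- by rewrite subr0 normr1; lra.
Qed.

Theorem proposition3p5 (L : language) (T : set (sentence L))
  (hT : complete_theory T) (C : structure L) (hC : monster_model C T)
  (L' : language) (I : structure L') (k : nat) :
  cont_modeling_property C I k <-> modeling_property C I k.
Proof.
split.
- move=> H a; have [b [hb hlb]] := H a; exists b; split => // n Delta j.
  have h2 : (0 : RR) < 1 / 2 by lra.
  have [i [hq hi]] := hlb n (List.map (@tr L _) Delta) j (1 / 2) h2.
  exists i; split => // phi hphi.
  have := hi (tr phi) (List.in_map _ _ _ hphi); rewrite !tr_ok.
  exact: tv_half.
- move=> H a; have [b [hb hlb]] := H a; exists b; split => // n Delta j eps e0.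
  have [Phi hPhi] := approx_list C Delta e0.
  have [i [hq hi]] := hlb n Phi j.
  exists i; split => // phi hphi; apply: hPhi => //.
Qed.
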